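(* Let $\mathcal{G}=(\mathcal{V},\mathcal{A})$ be the information-flow graph of a single-sender single-uniprior index-coding instance with message lengths $q_1,\dots,q_n$. Then \[ \ell^*(\mathcal{G}) \leq \sum_{k \in \mathcal{V}} q_k - \sum_{i \in \mathcal{L}(\mathcal{G})} q_i - \sum_{\mathcal{V}_{S} \in \mathbb{V}} \min_{a \in \mathcal{V}_{S}} q_a, \] where $\mathbb{V}$ is the set of vertex sets of all leaf SCCs of $\mathcal{G}$.
   Context: Single-sender single-uniprior index coding: there are $n$ receivers and $n$ independent messages $x_1,\dots,x_n$; message $x_i$ consists of $q_i\ge 1$ bits, each independently uniformly distributed on $\{0,1\}$. A single sender knows all messages. Receiver $i$ knows $x_i$ a priori and requests a set $\mathcal{W}_i$ of messages with $x_i\notin\mathcal{W}_i$. The information-flow graph is the directed graph $\mathcal{G}=(\mathcal{V},\mathcal{A})$ with $\mathcal{V}=\{1,\dots,n\}$ and an arc $(j\to i)\in\mathcal{A}$ iff $x_j\in\mathcal{W}_i$. An index code of length $\ell$ consists of an encoding function $E:\{0,1\}^{\sum_i q_i}\to\{0,1\}^\ell$ and, for each receiver $i$, a decoding function $D_i$ such that $D_i(E(x_1,\dots,x_n),x_i)$ equals the tuple of messages in $\mathcal{W}_i$ for all values of the messages. $\ell^*(\mathcal{G})$ denotes the minimum length of an index code. A leaf vertex is a vertex with no outgoing arcs; $\mathcal{L}(\mathcal{G})$ is the set of leaf vertices. A strongly connected component (SCC) is a maximal subgraph in which every ordered pair of vertices is joined by a directed path inside the subgraph. A leaf SCC is an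 SCC with at least two vertices from which no arc goes to a vertex outside the SCC. *)

(* Defs.v *)
From mathcomp Require Import all_boot all_order all_algebra.
From mathcomp Require Import boolp.
Set Implicit Arguments. Unset Strict Implicit. Unset Printing Implicit Defensive.

Section IndexCoding.
Variables (n : nat) (q : 'I_n -> nat).

Definition msg (i : 'I_n) := {ffun 'I_(q i) -> bool}.
Definition msgs := {dffun forall i : 'I_n, msg i}.

(* arc relation: A j i  <=>  arc (j -> i)  <=>  x_j \in W_i *)
Variable A : rel 'I_n.

(* An index code of length l: an encoding E into l bits, and for every
   receiver i a decoding function D i taking the codeword and x_i and
   returning (a tuple indexed by all j, of which only the entries with
   x_j \in W_i, i.e. A j i, are constrained) the requested messages. *)
Definition is_index_code (l : nat) (E : msgs -> {ffun 'I_l -> bool})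
  (D : forall i : 'I_n, {ffun 'I_l -> bool} -> msg i -> forall j : 'I_n, msg j) :=
  forall (x : msgs) (i j : 'I_n), A j i -> D i (E x) (x i) j = x j.

Definition has_index_code (l : nat) : Prop :=
  exists E D, @is_index_code l E D.

Lemma has_index_code_exists : exists l, asbool (has_index_code l).
Proof.
exists #|msgs|; apply/asboolP.
pose E := fun x : msgs => [ffun k : 'I_#|msgs| => k == enum_rank x].
have Einj : injective E.
  move=> x y /ffunP /(_ (enum_rank x)); rewrite !ffunE eqxx => /esym/eqP.
  by move/enum_rank_inj.
exists E.
exists (fun i c (_ : msg i) j =>
  match [pick y | E y == c] with Some y => y j | None => [ffun=> false] end).
move=> x i j _; case: pickP => [y /eqP/Einj -> //|/(_ x)]; by rewrite eqxx.
Qed.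

Definition ell_star : nat := ex_minn has_index_code_exists.

Definition leaves : {set 'I_n} := [set i | [forall k, ~~ A i k]].

Definition induced_rel (C : {set 'I_n}) : rel 'I_n :=
  [rel x y | [&& x \in C, y \in C & A x y]].

Definition strongly_connected (C : {set 'I_n}) : bool :=
  [forall u in C, forall v in C, connect (induced_rel C) u v].

Definition is_scc (C : {set 'I_n}) : bool := maxset strongly_connected C.

Definition is_leaf_scc (C : {set 'I_n}) : bool :=
  [&& is_scc C, 1 < #|C| & [forall u in C, forall w, A u w ==> (w \in C)]].

Definition leaf_sccs : {set {set 'I_n}} := [set C | is_leaf_scc C].

(* min_{a in C} q_a ; the neutral element (max of all q) is irrelevant for
   nonempty C, which is the case for every leaf SCC *)
Definition max_q : nat := \max_(k : 'I_n) q k.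
Definition min_q (C : {set 'I_n}) : nat :=
  \big[minn/max_q]_(a in C) q a.

End IndexCoding.

(* Main.v *)
Require Import Defs.
From mathcomp Require Import all_boot all_order all_algebra.
From mathcomp Require Import boolp zify.
Set Implicit Arguments. Unset Strict Implicit. Unset Printing Implicit Defensive.

Lemma code_of_f n (q : 'I_n -> nat) (A : rel 'I_n) (Y : finType) (l : nat)
  (f : msgs q -> Y) : #|Y| <= 2 ^ l ->
  (forall x y i j, A j i -> f x = f y -> x i = y i -> x j = y j) ->
  has_index_code q A l.
Proof.
move=> cardY det.
have H : #|Y| <= #|{ffun 'I_l -> bool}| by rewrite card_ffun card_bool card_ord.
pose g (y : Y) : {ffun 'I_l -> bool} := enum_val (widen_ord H (enum_rank y)).
have ginj : injective g.
  move=> y1 y2 /enum_val_inj /(congr1 val) /= /val_inj; exact: enum_rank_inj.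
exists (fun x => g (f x)).
exists (fun i c (xi : msg q i) j =>
  match [pick y : msgs q | (g (f y) == c) && (y i == xi)] with
  | Some y => y j | None => [ffun=> false] end).
move=> x i j Aji; case: pickP => [y /andP[/eqP /ginj fy /eqP yi]|/(_ x)].
  exact: det Aji fy yi.
by rewrite !eqxx.
Qed.

Lemma sc_union n (A : rel 'I_n) (C1 C2 : {set 'I_n}) v :
  strongly_connected A C1 -> strongly_connected A C2 -> v \in C1 -> v \in C2 ->
  strongly_connected A (C1 :|: C2).
Proof.
move=> /forall_inP s1 /forall_inP s2 v1 v2.
have sub1 : forall x y, connect (induced_rel A C1) x y ->
    connect (induced_rel A (C1 :|: C2)) x y.
  apply: connect_sub => x y /and3P[x1 y1 xy]; apply: connect1.
  by rewrite /induced_rel /= !inE x1 y1 xy.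
have sub2 : forall x y, connect (induced_rel A C2) x y ->
    connect (induced_rel A (C1 :|: C2)) x y.
  apply: connect_sub => x y /and3P[x1 y1 xy]; apply: connect1.
  by rewrite /induced_rel /= !inE x1 y1 xy !orbT.
apply/forall_inP => x; rewrite inE => /orP[x1|x2]; apply/forall_inP => y;
  rewrite inE => /orP[y1|y2].
- by apply: sub1; exact: (forall_inP (s1 x x1)).
- apply: connect_trans (sub1 _ _ (forall_inP (s1 x x1) v v1)) _.
  by apply: sub2; exact: (forall_inP (s2 v v2)).
- apply: connect_trans (sub2 _ _ (forall_inP (s2 x x2) v v2)) _.
  by apply: sub1; exact: (forall_inP (s1 v v1)).
- by apply: sub2; exact: (forall_inP (s2 x x2)).
Qed.

Lemma scc_disj n (A : rel 'I_n) (C1 C2 : {set 'I_n}) v :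
  is_scc A C1 -> is_scc A C2 -> v \in C1 -> v \in C2 -> C1 = C2.
Proof.
move=> /maxsetP[s1 m1] /maxsetP[s2 m2] v1 v2.
have su := sc_union s1 s2 v1 v2.
have e1 := m1 _ su (subsetUl _ _).
have e2 : C1 :|: C2 = C2 by apply: m2; [rewrite setUC; exact: sc_union s2 s1 v2 v1|exact: subsetUr].
by rewrite -e1 e2.
Qed.

Lemma leaf_scc_notleaf n (A : rel 'I_n) C v :
  is_leaf_scc A C -> v \in C -> v \notin leaves A.
Proof.
move=> /and3P[/maxsetP[/forall_inP sc _] c2 _] vC.
have : (C :\ v) != set0.
  by rewrite -card_gt0 (cardsD1 v C) vC add1n in c2 *.
case/set0Pn => u; rewrite !inE => /andP[uv uC].
have := forall_inP (sc v vC) u uC.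
case/connectP => [[|w p]] /=; first by move=> _ e; rewrite e eqxx in uv.
case/andP => /and3P[_ _ vw] _ _.
apply/negP => /forallP /(_ w); by rewrite vw.
Qed.

Definition rep n (q : 'I_n -> nat) (C : {set 'I_n}) : option 'I_n :=
  [pick a in C | [forall v in C, q a <= q v]].
Definition scc_of n (A : rel 'I_n) v : option {set 'I_n} :=
  [pick C in leaf_sccs A | v \in C].
Definition partner n (q : 'I_n -> nat) (A : rel 'I_n) v : option 'I_n :=
  if scc_of A v is Some C then rep q C else None.
Definition rr n (q : 'I_n -> nat) (A : rel 'I_n) v : nat :=
  if v \in leaves A then 0 else if partner q A v == Some v then 0 else q v.

Lemma rep_spec n (q : 'I_n -> nat) (C : {set 'I_n}) a0 : a0 \in C ->
  exists a, [/\ rep q C = Some a, a \in C & forall v, v \in C -> q a <= q v].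
Proof.
move=> a0C; rewrite /rep; case: pickP => [a /andP[aC /forall_inP H]|].
  by exists a; split.
case: (arg_minnP q a0C) => a aC H /(_ a) /=; have aC' : a \in C := aC; rewrite aC' /=.
by move/negP; case; apply/forall_inP => v vC; exact: H.
Qed.

Lemma scc_of_spec n (A : rel 'I_n) C v : C \in leaf_sccs A -> v \in C ->
  scc_of A v = Some C.
Proof.
move=> CL vC; rewrite /scc_of; case: pickP => [C' /andP[C'L vC']|/(_ C)].
  congr Some; move: CL C'L; rewrite !inE => /and3P[s1 _ _] /and3P[s2 _ _].
  exact: scc_disj s2 s1 vC' vC.
by rewrite CL vC.
Qed.

Lemma scc_of_in n (A : rel 'I_n) C v : scc_of A v = Some C ->
  C \in leaf_sccs A /\ v \in C.
Proof. by rewrite /scc_of; case: pickP => // C' /andP[? ?] [<-]. Qed.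

Definition get n (q : 'I_n -> nat) (x : msgs q) v (k : nat) : bool :=
  if (insub k : option 'I_(q v)) is Some o then x v o else false.

Lemma get_out n (q : 'I_n -> nat) (x : msgs q) v k : q v <= k -> get x v k = false.
Proof. by move=> H; rewrite /get insubF // ltnNge H. Qed.

Lemma get_ext n (q : 'I_n -> nat) (x y : msgs q) v :
  (forall k, get x v k = get y v k) -> x v = y v.
Proof. by move=> H; apply/ffunP => o; have := H o; rewrite /get valK. Qed.

Definition bit n (q : 'I_n -> nat) (A : rel 'I_n) (x : msgs q) v k : bool :=
  get x v k (+) (if partner q A v is Some a then get x a k else false).

Definition enc n (q : 'I_n -> nat) (A : rel 'I_n) (x : msgs q) :
  {dffun forall v : 'I_n, {ffun 'I_(rr q A v) -> bool}} :=
  [ffun v => [ffun k : 'I_(rr q A v) => bit A x v k]].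

Lemma enc_bit n (q : 'I_n -> nat) (A : rel 'I_n) (x y : msgs q) v k :
  enc A x = enc A y -> rr q A v = q v -> k < q v -> bit A x v k = bit A y v k.
Proof.
move=> E rv kq; rewrite -rv in kq.
have E1 : enc A x v = enc A y v by rewrite E.
have := congr1 (fun g : {ffun 'I_(rr q A v) -> bool} => g (Ordinal kq)) E1.
by rewrite /enc !ffunE.
Qed.

Lemma enc_det n (q : 'I_n -> nat) (A : rel 'I_n) (x y : msgs q) i j :
  A j i -> enc A x = enc A y -> x i = y i -> x j = y j.
Proof.
move=> Aji E xi.
have gi : forall k, get x i k = get y i k by move=> k; rewrite /get xi.
have jnl : j \notin leaves A.
  by rewrite /leaves inE; apply/negP => /forallP /(_ i); rewrite Aji.
case sj: (scc_of A j) => [C|].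
  have [CL jC] := scc_of_in sj.
  have iC : i \in C.
    move: (CL); rewrite inE => /and3P[_ _ /forall_inP /(_ j jC) /forallP /(_ i)].
    by rewrite Aji.
  have si := scc_of_spec CL iC.
  have [a [ra aC amin]] := rep_spec q jC.
  have pi : partner q A i = Some a by rewrite /partner si.
  have pj : partner q A j = Some a by rewrite /partner sj.
  have ga : forall k, get x a k = get y a k.
    move=> k; case: (ltnP k (q a)) => ka; last by rewrite !get_out.
    have [<-|ia] := eqVneq i a; first exact: gi.
    have ri : rr q A i = q i.
      rewrite /rr (negbTE (leaf_scc_notleaf _ iC)); last by move: CL; rewrite inE.
      by rewrite pi; case: eqP => // [[]] e; rewrite e eqxx in ia.
    have := enc_bit E ri (leq_trans ka (amin _ iC)).
    rewrite /bit pi gi; by case: (get y i k); case: (get x a k); case: (get y a k).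
  apply: get_ext => k.
  have [->|ja] := eqVneq j a; first exact: ga.
  case: (ltnP k (q j)) => kj; last by rewrite !get_out.
  have rj : rr q A j = q j.
    rewrite /rr (negbTE jnl) pj; by case: eqP => // [[]] e; rewrite e eqxx in ja.
  have := enc_bit E rj kj.
  rewrite /bit pj ga; by case: (get y a k); case: (get x j k); case: (get y j k).
have pj : partner q A j = None by rewrite /partner sj.
apply: get_ext => k.
case: (ltnP k (q j)) => kj; last by rewrite !get_out.
have rj : rr q A j = q j by rewrite /rr (negbTE jnl) pj.
by have := enc_bit E rj kj; rewrite /bit pj !addbF.
Qed.
Lemma card_enc n (q : 'I_n -> nat) (A : rel 'I_n) :
  #|{dffun forall v : 'I_n, {ffun 'I_(rr q A v) -> bool}}| = 2 ^ (\sum_v rr q A v).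
Proof.
rewrite card_dep_ffun foldrE big_image expn_sum.
by apply: eq_bigr => v _; rewrite card_ffun card_bool card_ord.
Qed.
Definition qrep n (q : 'I_n -> nat) (C : {set 'I_n}) : nat :=
  if rep q C is Some a then q a else 0.

Lemma P_notleaf n (q : 'I_n -> nat) (A : rel 'I_n) v :
  partner q A v == Some v -> v \notin leaves A.
Proof.
rewrite /partner; case sv: (scc_of A v) => [C|] // _.
have [CL vC] := scc_of_in sv.
by apply: (leaf_scc_notleaf _ vC); move: CL; rewrite inE.
Qed.

Lemma count_eq n (q : 'I_n -> nat) (A : rel 'I_n) :
  \sum_v rr q A v + \sum_(i in leaves A) q i + \sum_(C in leaf_sccs A) qrep q C
  = \sum_v q v.
Proof.
have -> : \sum_(C in leaf_sccs A) qrep q C =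
          \sum_(v | partner q A v == Some v) q v.
  rewrite (partition_big (fun v => odflt set0 (scc_of A v)) (mem (leaf_sccs A))) /=;
    last first.
    move=> v; rewrite /partner; case sv: (scc_of A v) => [C|] // _.
    by have [] := scc_of_in sv.
  apply: eq_bigr => C CL.
  have : 0 < #|C| by move: CL; rewrite inE => /and3P[_ c2 _]; apply: ltnW.
  rewrite card_gt0 => /set0Pn[a0 a0C].
  have [a [ra aC amin]] := rep_spec q a0C.
  rewrite /qrep ra (big_pred1 a) // => v /=.
  apply/andP/eqP => [[]|->].
    rewrite /partner; case sv: (scc_of A v) => [C'|] /=.
      move/eqP => pv /eqP e; subst C'; congruence.
    by move=> _ /eqP e; rewrite -e in a0C; rewrite inE in a0C.
  by rewrite /partner (scc_of_spec CL aC) ra eqxx.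
rewrite (big_mkcond (fun i => i \in leaves A)) (big_mkcond (fun v => partner q A v == Some v)) -!big_split /=.
apply: eq_bigr => v _; rewrite /rr.
case: ifP => vl.
  by case: ifP => [/P_notleaf|_]; [rewrite vl | rewrite add0n addn0].
by case: ifP => _; rewrite ?addn0 ?add0n.
Qed.

Lemma bigmin_le n (F : 'I_n -> nat) (P : pred 'I_n) m r a :
  a \in r -> P a -> \big[minn/m]_(i <- r | P i) F i <= F a.
Proof.
elim: r => // b r IH; rewrite inE big_cons => /orP[/eqP <- ->|ar Pa].
  exact: geq_minl.
case: ifP => _; last exact: IH.
by rewrite geq_min IH ?orbT.
Qed.

Theorem theorem2 (n : nat) (q : 'I_n -> nat) (A : rel 'I_n)
  (q_pos : forall i, 0 < q i)
  (no_loop : forall i, ~~ A i i) :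
  ((ell_star q A)%:Z <=
     (\sum_(k : 'I_n) q k)%:Z - (\sum_(i in leaves A) q i)%:Z
     - (\sum_(C in leaf_sccs A) min_q q C)%:Z)%R.
Proof.
have hc : has_index_code q A (\sum_v rr q A v).
  apply: (@code_of_f _ q A _ _ (@enc n q A)); first by rewrite card_enc.
  move=> x y i j Aji E xi; exact: enc_det Aji E xi.
have le1 : ell_star q A <= \sum_v rr q A v.
  rewrite /ell_star; case: ex_minnP => m _; apply; exact/asboolP.
have le2 : \sum_(C in leaf_sccs A) min_q q C <= \sum_(C in leaf_sccs A) qrep q C.
  apply: leq_sum => C CL.
  have : 0 < #|C| by move: CL; rewrite inE => /and3P[_ c2 _]; apply: ltnW.
  rewrite card_gt0 => /set0Pn[a0 a0C].
  have [a [ra aC _]] := rep_spec q a0C.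
  rewrite /qrep ra /min_q; apply: bigmin_le => //; exact: mem_index_enum.
have e := count_eq q A.
move: le1 le2 e; rewrite /=. move: (ell_star q A) (\sum_v rr q A v) (\sum_(i in leaves A) q i) (\sum_(C in leaf_sccs A) qrep q C) (\sum_(C in leaf_sccs A) min_q q C) (\sum_k q k) => a b c d f g h1 h2 h3. rewrite -h3 !PoszD. lia.
Qed.
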